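(* For each positive integer $k$, let $w_k$ be the optimal value of the linear program \[ \max\sum_{j=1}^k\alpha_j\ \text{ s.t. } f+\sum_{j=1}^k d_j\le1;\ \alpha_j\le\alpha_{j+1}\ (1\le j<k);\ \alpha_j\le3\alpha_l+3d_j+3d_l\ (1\le j,l\le k);\ x_{jl}\ge\alpha_j-d_l\ (1\le j\le l\le k);\ \sum_{l=j}^k x_{jl}\le f\ (1\le j\le k);\ \alpha_j,d_j,f,x_{jl}\ge0. \] Then $\sup_{k \ge 1} w_k \ge 3.220$. *)

(* Defs.v *)
From HB Require Import structures.
From mathcomp Require Import all_boot all_order all_algebra.
From mathcomp Require Import boolp classical_sets reals constructive_ereal ereal.
Set Implicit Arguments. Unset Strict Implicit. Unset Printing Implicit Defensive.
Import Order.TTheory GRing.Theory Num.Theory.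
Local Open Scope ring_scope.
Local Open Scope classical_set_scope.

(* Indices 1..k of the paper are represented by 'I_k = {0,...,k-1}. *)
Definition lp_feasible (R : realType) (k : nat)
  (alpha d : 'I_k -> R) (f : R) (x : 'I_k -> 'I_k -> R) : Prop :=
  (f + \sum_(j < k) d j <= 1) /\
  (forall j l : 'I_k, nat_of_ord l = (nat_of_ord j).+1 -> alpha j <= alpha l) /\
  (forall j l : 'I_k, alpha j <= 3%:R * alpha l + 3%:R * d j + 3%:R * d l) /\
  (forall j l : 'I_k, (j <= l)%N -> alpha j - d l <= x j l) /\
  (forall j : 'I_k, \sum_(l < k | (j <= l)%N) x j l <= f) /\
  (forall j, 0 <= alpha j) /\ (forall j, 0 <= d j) /\ 0 <= f /\
  (forall j l, 0 <= x j l).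

Definition w (R : realType) (k : nat) : \bar R :=
  ereal_sup [set ((\sum_(j < k) alpha j)%:E) | alpha in
    [set alpha : 'I_k -> R | exists d f x, lp_feasible alpha d f x]].

(* Main.v *)
From Stdlib Require Import NArith Lia.
Require Import Defs.
From HB Require Import structures.
From mathcomp Require Import all_boot all_order all_algebra.
From mathcomp Require Import boolp classical_sets reals constructive_ereal ereal.
From mathcomp Require Import lra.
Import Order.TTheory GRing.Theory Num.Theory.
Local Open Scope ring_scope.
Local Open Scope classical_set_scope.

(* Explicit feasible solution of the LP for k = 700, given by integer
   numerators over the common denominator Den; verified by computation. *)
Definition Alist : seq N := ([:: 2075368; 2077991; 2080627; 2083278; 2085943; 2088623; 2091318; 2094028; 2096753; 2099493; 2102248; 2105019; 2107805; 2110607; 2113419; 2116247; 2119091; 2121951; 2124827; 2127719; 2130627; 2133552; 2136494; 2139452; 2142428; 2145420; 2148425; 2151445; 2154484; 2157539; 2160613; 2163704; 2166812; 2169939; 2173084; 2176248; 2179429; 2182627; 2185840; 2189071; 2192322; 2195591; 2198880; 2202188; 2205516; 2208863; 2212231; 2215618; 2219022; 2222443; 2225884; 2229346; 2232828; 2236332; 2239856; 2243402; 2246969; 2250558; 2254168; 2257793; 2261440; 2265109; 2268801; 2272515; 2276252; 2280012; 2283795; 2287601; 2291429; 2295275; 2299144; 2303037; 2306955; 2310897; 2314863; 2318855; 2322871; 2326913; 2330972; 2335056; 2339166; 2343302; 2347463; 2351652; 2355866; 2360108; 2364377; 2368666; 2372980; 2377322; 2381692; 2386090; 2390517; 2394972;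 2399455; 2403968; 2408500; 2413062; 2417654; 2422276; 2426928; 2431610; 2436324; 2441068; 2445836; 2450633; 2455462; 2460322; 2465215; 2470141; 2475099; 2480091; 2485108; 2490155; 2495237; 2500353; 2505503; 2510689; 2515909; 2521165; 2526445; 2531761; 2537113; 2542502; 2547928; 2553391; 2558892; 2564423; 2569987; 2575590; 2581232; 2586913; 2592634; 2598395; 2604190; 2610018; 2615887; 2621798; 2627750; 2633744; 2639781; 2645854; 2651962; 2658114; 2664310; 2670551; 2676836; 2683166; 2689531; 2695937; 2702390; 2708890; 2715437; 2722028; 2728647; 2735286; 2741957; 2748661; 2755398; 2762168; 2768971; 2775793; 2782647; 2789535; 2796457; 2803413; 2810404; 2817419; 2824463; 2831542; 2838656; 2845806; 2852993; 2860208; 2867449; 2874727; 2882041; 2889394; 2896783; 2904204; 2911651; 2919136; 2926660; 2934222; 2941824; 2949458; 2957119; 2964819; 2972560; 2980342; 2988164; 2996019; 3003903; 3011829; 3019797; 3027807; 3035860; 3043942; 3052060; 3060220; 3068424; 3076673; 3084966; 3093284; 3101644; 3110050; 3118501; 3126998; 3135537; 3144104; 3152718; 3161379; 3170088; 3178845; 3187636; 3196466; 3205345; 3214274; 3223252; 3232278; 3241332; 3250437; 3259593; 3268801; 3278061; 3287356; 3296695; 3306087; 3315533; 3325033; 3334579; 3344162; 3353799; 3363492; 3373241; 3383047; 3392881; 3402773; 3412723; 3422731; 3432798; 3442900; 3453056; 3463272; 3473549; 3483887; 3494267; 3504698; 3515191; 3525747; 3536367; 3547033; 3557749; 3568530;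 3579377; 3590289; 3601252; 3612265; 3623345; 3634494; 3645712; 3656980; 3668302; 3679694; 3691157; 3702692; 3714276; 3725919; 3737636; 3749427; 3761292; 3773203; 3785181; 3797236; 3809368; 3821577; 3833827; 3846154; 3858561; 3871048; 3883606; 3896215; 3908907; 3921681; 3934539; 3947457; 3960442; 3973513; 3986670; 3999915; 4013206; 4026583; 4040050; 4053607; 4067240; 4080934; 4094721; 4108602; 4122576; 4136607; 4150725; 4164940; 4179252; 4193646; 4208106; 4222667; 4237329; 4252094; 4266913; 4281833; 4296857; 4311986; 4327195; 4342486; 4357885; 4373393; 4389002; 4404677; 4420464; 4436365; 4452381; 4468460; 4484650; 4500958; 4517385; 4533893; 4550501; 4567230; 4584084; 4601036; 4618077; 4635244; 4652540; 4669948; 4687439; 4705061; 4722816; 4740696; 4758653; 4776747; 4794979; 4813348; 4831790; 4850374; 4869101; 4887973; 4906921; 4926014; 4945257; 4964650; 4984122; 5003745; 5023523; 5043457; 5063472; 5083645; 5103980; 5124474; 5145055; 5165801; 5186715; 5207789; 5228959; 5250302; 5271820; 5293494; 5315277; 5337241; 5359388; 5381681; 5404104; 5426716; 5449488; 5472385; 5495475; 5518741; 5542125; 5565709; 5589481; 5613368; 5637459; 5661753; 5686157; 5710773; 5735602; 5760541; 5785696; 5811072; 5836567; 5862279; 5888218; 5914286; 5940571; 5967092; 5993749; 6020627; 6047747; 6075012; 6102501; 6130240; 6158132; 6186251; 6214628; 6243167; 6271937; 6300974; 6330178; 6359621; 6389339; 6419231; 6449368; 6479790; 6510391; 6541246;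 6572395; 6603729; 6635325; 6667226; 6699316; 6731680; 6764358; 6797230; 6830387; 6863870; 6897549; 6931527; 6965842; 7000356; 7035184; 7070360; 7105738; 7141445; 7177513; 7213785; 7250403; 7287395; 7324591; 7362153; 7400103; 7438257; 7476797; 7515739; 7554885; 7594439; 7634403; 7674584; 7715190; 7756212; 7797469; 7839166; 7881285; 7923658; 7966489; 8009746; 8053278; 8097285; 8141725; 8186460; 8231606; 8277109; 8322842; 8369001; 8415522; 8462287; 8509493; 8557071; 8604904; 8653193; 8701870; 8750808; 8800217; 8850036; 8900117; 8950686; 9001693; 9052958; 9104728; 9156972; 9209463; 9262479; 9316010; 9369773; 9424079; 9478936; 9534034; 9589678; 9645894; 9702401; 9759433; 9817059; 9875037; 9933511; 9992601; 10052116; 10112086; 10172697; 10233819; 10295345; 10357536; 10420340; 10483483; 10547318; 10611857; 10676708; 10742253; 10808531; 10875241; 10942565; 11010653; 11079314; 11148493; 11218467; 11289177; 11360289; 11432229; 11505013; 11578220; 11652211; 11727083; 11802574; 11878706; 11955757; 12033656; 12112024; 12191351; 12271659; 12352495; 12434204; 12516936; 12600476; 12684675; 12769945; 12856308; 12943152; 13031079; 13120152; 13210049; 13300763; 13392676; 13485812; 13579448; 13674342; 13770522; 13867625; 13965649; 14065024; 14165779; 14267135; 14369868; 14474053; 14579379; 14685648; 14793444; 14902803; 15013005; 15124606; 15237854; 15352634; 15468250; 15585602; 15704732; 15825148; 15946836; 16070402; 16195893; 16322416; 16450676; 16580972; 16713285; 16846516; 16981904; 17119504; 17258978; 17399769;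 17542906; 17688454; 17835753; 17984777; 18136363; 18290579; 18446456; 18604473; 18765291; 18928991; 19094304; 19262167; 19433105; 19607209; 19782941; 19961621; 20143685; 20329237; 20516521; 20707121; 20901458; 21099651; 21299797; 21503578; 21711500; 21923700; 22138240; 22356649; 22579666; 22807448; 23038178; 23272888; 23512746; 23757933; 24006979; 24259675; 24469531; 24683317; 24901152; 25123159; 25349470; 25580217; 25815543; 26055595; 26300525; 26550496; 26805674; 27066235; 27332364; 27604253; 27882105; 28166132; 28456555; 28753609; 29057539; 29368604; 29687075; 30013239; 30347397; 30689867; 31040986; 31401107; 31770607; 32149882; 32539352; 32939464; 33350689; 33773532; 34208525; 34656237; 35117274; 35592282; 36081950; 36587017; 37108272; 37646561; 38202793; 38777945; 39373067; 39989293; 40627846; 41290049; 41977336; 42691262; 43433518; 44205946; 45010560; 45849559; 46725355; 47640603; 48598222; 49601443; 50653841; 51759391; 52922521; 54148185; 55441942; 56810052; 58259598; 59798621; 61436300; 63183158; 65051325; 67054867; 69210192; 71536575; 74056823; 76798145; 79793294; 80917387; 80917387; 80917387; 80917387; 80917387; 80917387; 80917387; 80917387; 80917387; 80917387; 80917387; 80917387; 80917387; 80917387; 80917387; 80917387; 80917387])%num.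
Definition Dlist : seq N := ([:: 638540; 635917; 633281; 630630; 627965; 625285; 622590; 619880; 617155; 614415; 611660; 608889; 606103; 603301; 600489; 597661; 594817; 591957; 589081; 586189; 583281; 580356; 577414; 574456; 571480; 568488; 565483; 562463; 559424; 556369; 553295; 550204; 547096; 543969; 540824; 537660; 534479; 531281; 528068; 524837; 521586; 518317; 515028; 511720; 508392; 505045; 501677; 498290; 494886; 491465; 488024; 484562; 481080; 477576; 474052; 470506; 466939; 463350; 459740; 456115; 452468; 448799; 445107; 441393; 437656; 433896; 430113; 426307; 422479; 418633; 414764; 410871; 406953; 403011; 399045; 395053; 391037; 386995; 382936; 378852; 374742; 370606; 366445; 362256; 358042; 353800; 349531; 345242; 340928; 336586; 332216; 327818; 323391; 318936; 314453; 309940; 305408; 300846; 296254; 291632; 286980; 282298; 277584; 272840; 268072; 263275; 258446; 253586; 248693; 243767; 238809; 233817; 228800; 223753; 218671; 213555; 208405; 203219; 197999; 192743; 187463; 182147; 176795; 171406; 165980; 160517; 155016; 149485; 143921; 138318; 132676; 126995; 121274; 115513; 109718; 103890; 98021; 92110; 86158; 80164; 74127; 68054; 61946; 55794; 49598; 43357; 37072; 30742; 24377; 17971; 11518; 5018; 0; 0; 0; 0; 0; 0; 0; 0; 0; 0; 0; 0; 0; 0; 0; 0; 0; 0; 0; 0; 0; 0; 0; 0; 0; 0; 0; 0; 0; 0; 0; 0; 0; 0; 0; 0; 0; 0; 0; 0; 0; 0; 0; 0; 0; 0; 0; 0; 0; 0; 0; 0; 0; 0; 0; 0; 0; 0; 0;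 0; 0; 0; 0; 0; 0; 0; 0; 0; 0; 0; 0; 0; 0; 0; 0; 0; 0; 0; 0; 0; 0; 0; 0; 0; 0; 0; 0; 0; 0; 0; 0; 0; 0; 0; 0; 0; 0; 0; 0; 0; 0; 0; 0; 0; 0; 0; 0; 0; 0; 0; 0; 0; 0; 0; 0; 0; 0; 0; 0; 0; 0; 0; 0; 0; 0; 0; 0; 0; 0; 0; 0; 0; 0; 0; 0; 0; 0; 0; 0; 0; 0; 0; 0; 0; 0; 0; 0; 0; 0; 0; 0; 0; 0; 0; 0; 0; 0; 0; 0; 0; 0; 0; 0; 0; 0; 0; 0; 0; 0; 0; 0; 0; 0; 0; 0; 0; 0; 0; 0; 0; 0; 0; 0; 0; 0; 0; 0; 0; 0; 0; 0; 0; 0; 0; 0; 0; 0; 0; 0; 0; 0; 0; 0; 0; 0; 0; 0; 0; 0; 0; 0; 0; 0; 0; 0; 0; 0; 0; 0; 0; 0; 0; 0; 0; 0; 0; 0; 0; 0; 0; 0; 0; 0; 0; 0; 0; 0; 0; 0; 0; 0; 0; 0; 0; 0; 0; 0; 0; 0; 0; 0; 0; 0; 0; 0; 0; 0; 0; 0; 0; 0; 0; 0; 0; 0; 0; 0; 0; 0; 0; 0; 0; 0; 0; 0; 0; 0; 0; 0; 0; 0; 0; 0; 0; 0; 0; 0; 0; 0; 0; 0; 0; 0; 0; 0; 0; 0; 0; 0; 0; 0; 0; 0; 0; 1; 14912; 29961; 45129; 60373; 75759; 91266; 106855; 122590; 138449; 154394; 170490; 186716; 203028; 219498; 236104; 252798;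 269654; 286657; 303745; 321002; 338416; 355913; 373585; 391429; 409350; 427452; 445738; 464104; 482652; 501390; 520226; 539237; 558445; 577771; 597263; 616959; 636798; 656788; 676991; 697365; 717874; 738604; 759539; 780587; 801865; 823378; 844995; 866843; 888936; 911173; 933614; 956310; 979197; 1002257; 1025581; 1049151; 1072855; 1096835; 1121097; 1145499; 1170163; 1195120; 1220284; 1245661; 1271345; 1297311; 1323434; 1349876; 1376645; 1403591; 1430827; 1458404; 1486251; 1514317; 1542741; 1571528; 1600476; 1629785; 1659476; 1689442; 1719680; 1750318; 1781363; 1812575; 1844206; 1876266; 1908634; 1941309; 1974434; 2008019; 2041804; 2076048; 2110777; 2145885; 2181308; 2217240; 2253693; 2290427; 2327628; 2365377; 2403637; 2442176; 2481293; 2521003; 2561142; 2601704; 2642893; 2684723; 2726898; 2769651; 2813083; 2857187; 2901598; 2946727; 2992594; 3039085; 3086015; 3133728; 3182244; 3231343; 3281018; 3331547; 3382952; 3434911; 3487583; 3541189; 3595756; 3650860; 3706815; 3763794; 3821829; 3880406; 3939966; 4000654; 4062505; 4124933; 4188466; 4253245; 4319309; 4386025; 4453952; 4523259; 4593992; 4665506; 4738309; 4812648; 4888575; 4965485; 5043722; 5123674; 5205403; 5288419; 5372651; 5442603; 5513865; 5586476; 5660479; 5735916; 5812831; 5891273; 5971291; 6052934; 6136258; 6221317; 6308171; 6396880; 6487510; 6580127; 6674803; 6771611; 6870629; 6971939; 7075627; 7181784; 7290505; 7401891; 7516048; 7633088; 7753128; 7876295; 8002720; 8132543; 8265914; 8402989;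 8543936; 8688934; 8838171; 8991850; 9150186; 9313409; 9481765; 9655516; 9834946; 10020357; 10212074; 10410448; 10615857; 10828708; 11049442; 11278538; 11516513; 11763932; 12021408; 12289612; 12569279; 12861211; 13166293; 13485500; 13819907; 14170706; 14539223; 14926933; 15335487; 15766740; 16222776; 16705958; 17218966; 17764859; 18347145; 18969867; 19637715; 20356156; 21131617; 21971700; 22885474; 23883857; 24258555; 24258555; 24258555; 24258555; 24258555; 24258555; 24258555; 24258555; 24258555; 24258555; 24258555; 24258555; 24258555; 24258555; 24258555; 24258555; 24258555])%num.
Definition Fz : N := 1000000000%num.
Definition Mz : N := 2713908%num.
Definition Den : N := 2555376019%num.

Definition kk : nat := 700.

Definition Nsum (s : seq N) : N := foldr N.add 0%num s.

Fixpoint chk_mono (s : seq N) : bool :=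
  match s with
  | a :: ((b :: _) as t) => N.leb a b && chk_mono t
  | _ => true
  end.

Fixpoint sumsub (a : N) (s : seq N) : N :=
  match s with
  | nil => 0%num
  | d :: t => N.add (N.sub a d) (sumsub a t)
  end.

Fixpoint chk4 (F : N) (As Ds : seq N) : bool :=
  match As, Ds with
  | a :: As', _ :: Ds' => N.leb (sumsub a Ds) F && chk4 F As' Ds'
  | _, _ => true
  end.

Fixpoint chkr (M : N) (As Ds : seq N) : bool :=
  match As, Ds with
  | a :: As', d :: Ds' => N.leb M (N.add a d) &&
      N.leb a (N.add (N.mul 3 M) (N.mul 3 d)) && chkr M As' Ds'
  | _, _ => true
  end.

Definition chk_all : bool :=
  [&& size Alist == kk, size Dlist == kk,
      N.ltb 0 Den, N.leb (N.add Fz (Nsum Dlist)) Den,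
      chk_mono Alist, chkr Mz Alist Dlist, chk4 Fz Alist Dlist &
      N.leb (N.mul 3220 Den) (N.mul 1000 (Nsum Alist))].

Lemma chk_all_ok : chk_all = true.
Proof. vm_compute. reflexivity. Qed.


Definition toR (R : realType) (n : N) : R := (N.to_nat n)%:R.

Lemma toRD (R : realType) a b : toR R (N.add a b) = toR R a + toR R b.
Proof. by rewrite /toR Nnat.N2Nat.inj_add plusE natrD. Qed.

Lemma toRM (R : realType) a b : toR R (N.mul a b) = toR R a * toR R b.
Proof. by rewrite /toR Nnat.N2Nat.inj_mul multE natrM. Qed.

Lemma toR_ge0 (R : realType) a : 0 <= toR R a.
Proof. exact: ler0n. Qed.

Lemma toR_le (R : realType) a b : N.leb a b = true -> toR R a <= toR R b.
Proof.
move/N.leb_le => h.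
have -> : b = N.add a (N.sub b a) by lia.
by rewrite toRD lerDl toR_ge0.
Qed.

Lemma toR_pos (R : realType) a : N.ltb 0 a = true -> 0 < toR R a.
Proof.
move/N.ltb_lt => h.
have -> : a = N.add 1 (N.sub a 1) by lia.
by rewrite toRD (_ : toR R 1 = 1) // ltr_pwDl // toR_ge0.
Qed.

Lemma toR_sub (R : realType) a b : toR R a <= toR R (N.sub a b) + toR R b.
Proof. rewrite -toRD; apply: toR_le; apply/N.leb_le; lia. Qed.

Lemma sum_sumsub (R : realType) a s :
  \sum_(d <- s) toR R (N.sub a d) = toR R (sumsub a s).
Proof.
elim: s => [|d s IH]; first by rewrite big_nil.
by rewrite big_cons IH /= toRD.
Qed.

Lemma sum_Nsum (R : realType) s : \sum_(a <- s) toR R a = toR R (Nsum s).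
Proof.
elim: s => [|d s IH]; first by rewrite big_nil.
by rewrite big_cons IH /= toRD.
Qed.

Lemma big_suffix (R : realType) (G : N -> R) (s : seq N) n j :
  n = size s ->
  \sum_(l < n | (j <= l)%N) G (nth 0%num s l) = \sum_(d <- drop j s) G d.
Proof.
move=> ->.
transitivity (\sum_(l < size s | predT l && (j <= l)%N) G (nth 0%num s l)).
  by apply: eq_bigl.
rewrite -(big_geq_mkord j (size s) predT (fun l => G (nth 0%num s l))) /index_iota.
rewrite -(big_map (nth 0%num s) predT G).
by rewrite map_nth_iota // take_oversize // size_drop.
Qed.

Lemma sum_ord (R : realType) (G : N -> R) (s : seq N) n :
  n = size s -> \sum_(l < n) G (nth 0%num s l) = \sum_(d <- s) G d.
Proof.
move=> hn; transitivity (\sum_(d <- drop 0 s) G d); last by rewrite drop0.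
rewrite -(@big_suffix R G s n 0 hn).
by apply: eq_bigl.
Qed.

Lemma chk4P F As Ds j : chk4 F As Ds -> size As = size Ds -> (j < size As)%N ->
  N.leb (sumsub (nth 0%num As j) (drop j Ds)) F.
Proof.
elim: As Ds j => [|a As IH] [|d Ds] [|j] //= /andP[h1 h2] [hs] hj.
  by [].
exact: IH.
Qed.

Lemma chk_monoP s j : chk_mono s -> (j.+1 < size s)%N ->
  N.leb (nth 0%num s j) (nth 0%num s j.+1).
Proof.
elim: s j => [|a [|b s] IH] [|j] //=; first by case/andP.
by case/andP=> _ h hj; apply: (IH j h).
Qed.

Lemma chkrP M As Ds j : chkr M As Ds -> size As = size Ds -> (j < size As)%N ->
  N.leb M (N.add (nth 0%num As j) (nth 0%num Ds j)) &&
  N.leb (nth 0%num As j) (N.add (N.mul 3 M) (N.mul 3 (nth 0%num Ds j))).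
Proof.
elim: As Ds j => [|a As IH] [|d Ds] [|j] //= /andP[/andP[h1 h2] h3] [hs] hj.
  by rewrite h1 h2.
exact: IH.
Qed.

Lemma main_gen (R : realType) (As Ds : seq N) (F M Den : N) (k : nat) :
  size As = k -> size Ds = k -> N.ltb 0 Den ->
  N.leb (N.add F (Nsum Ds)) Den -> chk_mono As -> chkr M As Ds -> chk4 F As Ds ->
  N.leb (N.mul 3220 Den) (N.mul 1000 (Nsum As)) ->
  (((3220%:R / 1000%:R : R))%:E <= w R k)%E.
Proof.
move=> hA hD hDen hB hM hR h4 hO.
have D0 : 0 < toR R Den := @toR_pos R _ hDen.
have iD0 : 0 <= (toR R Den)^-1 by rewrite invr_ge0 ltW.
pose a : 'I_k -> R := fun j => toR R (nth 0%num As j) / toR R Den.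
pose dd : 'I_k -> R := fun j => toR R (nth 0%num Ds j) / toR R Den.
pose ff : R := toR R F / toR R Den.
pose x : 'I_k -> 'I_k -> R := fun j l =>
  toR R (N.sub (nth 0%num As j) (nth 0%num Ds l)) / toR R Den.
have h3 : toR R 3 = 3%:R by [].
have hRj : forall j : 'I_k,
    toR R M <= toR R (nth 0%num As j) + toR R (nth 0%num Ds j) /\
    toR R (nth 0%num As j) <= 3%:R * toR R M + 3%:R * toR R (nth 0%num Ds j).
  move=> j.
  have /andP[e1 e2] := @chkrP M As Ds j hR (etrans hA (esym hD)) (eq_ind_r (fun n => (j < n)%N) (ltn_ord j) hA).
  split; first by rewrite -toRD; apply: toR_le.
  by rewrite -h3 -!toRM -toRD; apply: toR_le.
have feas : lp_feasible a dd ff x.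
  split.
    rewrite /ff /dd -mulr_suml -mulrDl ler_pdivrMr // mul1r.
    rewrite (_ : \sum_(i < k) toR R (nth 0%num Ds i) = \sum_(d <- Ds) toR R d);
      last exact: sum_ord.
    by rewrite sum_Nsum -toRD; apply: toR_le.
  split.
    move=> j l hl; rewrite /a hl; apply: ler_wpM2r => //; apply: toR_le.
    apply: chk_monoP => //; rewrite hA -hl; exact: ltn_ord.
  split.
    move=> j l; rewrite /a /dd !mulrA -!mulrDl; apply: ler_wpM2r => //.
    have [e1 e2] := hRj j; have [e3 e4] := hRj l.
    lra.
  split.
    move=> j l _; rewrite /a /dd /x -mulrBl; apply: ler_wpM2r => //.
    have := toR_sub R (nth 0%num As j) (nth 0%num Ds l); lra.
  split.
    move=> j; rewrite /x /ff -mulr_suml; apply: ler_wpM2r => //.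
    rewrite (_ : \sum_(l < k | (j <= l)%N) _ =
       \sum_(d <- drop j Ds) toR R (N.sub (nth 0%num As j) d));
      last exact: big_suffix.
    rewrite sum_sumsub; apply: toR_le; apply: chk4P => //; first by rewrite hA hD.
    by rewrite hA.
  split; first by move=> j; rewrite /a divr_ge0 // toR_ge0.
  split; first by move=> j; rewrite /dd divr_ge0 // toR_ge0.
  split; first by rewrite /ff divr_ge0 // toR_ge0.
  by move=> j l; rewrite /x divr_ge0 // toR_ge0.
have obj : 3220%:R / 1000%:R <= \sum_(j < k) a j.
  rewrite /a -mulr_suml.
  rewrite (_ : \sum_(i < k) toR R (nth 0%num As i) = \sum_(d <- As) toR R d);
    last exact: sum_ord.
  rewrite sum_Nsum ler_pdivrMr ?ltr0n // mulrAC ler_pdivlMr //.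
  have := @toR_le R _ _ hO; rewrite !toRM.
  rewrite (_ : toR R 3220 = 3220%:R) // (_ : toR R 1000 = 1000%:R) //.
  by rewrite mulrC [_ * 1000%:R]mulrC.
apply: (@le_trans _ _ ((\sum_(j < k) a j)%:E)); first by rewrite lee_fin.
apply: ereal_sup_ubound; exists a => //.
by exists dd, ff, x.
Qed.

Theorem lemma4 (R : realType) :
  (((3220%:R / 1000%:R : R))%:E <= ereal_sup [set w R k | k in [set k : nat | (0 < k)%N]])%E.
Proof.
have := chk_all_ok; rewrite /chk_all.
move=> /andP[/eqP hA /andP[/eqP hD /andP[hDen /andP[hB /andP[hM /andP[hR /andP[h4 hO]]]]]]].
apply: (@le_trans _ _ (w R kk)).
  exact: (@main_gen R Alist Dlist Fz Mz Den kk hA hD hDen hB hM hR h4 hO).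
by apply: ereal_sup_ubound; exists kk.
Qed.
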